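(* Let $R\subset S$ be an FCP ring extension with Loewy series $\{S_i\}_{i=0}^n$, and let $T\in[R,S]$, $T\neq R,S$, be such that $\mathrm{Supp}_R(T/R)\cap\mathrm{Supp}_R(S/T)=\emptyset$. Then: (1) $T$ has a unique complement $U\in[R,S]$, i.e. a unique $U$ with $T\cap U=R$ and $TU=S$. (2) Let $\{T_i\}_{i=0}^m$ and $\{U_i\}_{i=0}^r$ be the Loewy series of $R\subseteq T$ and $R\subseteq U$ respectively. Then $S_i=T_iU_i$ for each $i\in\{0,\ldots,n\}$, and $n=\pounds[R,S]=\sup(\pounds[R,T],\pounds[R,U])=\sup(m,r)$.
   Context: All rings are commutative with identity. $[R,S]$ is the lattice of $R$-subalgebras of $S$ (meet = intersection, join = product). FCP: every chain in $[R,S]$ is finite. $T\subset U$ minimal means $[T,U]=\{T,U\}$; atoms of $[A,B]$ are $C$ with $A\subset C$ minimal; the socle $\mathcal S[A,B]$ is the product of all atoms of $[A,B]$. The Loewy series of $A\subseteq B$: $S_0=A$, $S_{i+1}=\mathcal S[S_i,B]$ while $S_i\neq B$, and $\pounds[A,B]$ is the least $n$ with $S_n=B$; by convention the terms of a Loewy series beyond its length are all equal to its top (e.g. $T_i=T$ for $i\geq m$ and $U_i=U$ for $i\geq r$). $\mathrm{Supp}_R(E)$ is the set of primes $P$ of $R$ with $E_P\neq 0$. *)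

(* Defs.v *)
From mathcomp Require Import all_boot all_algebra.
From Stdlib Require List.
Set Implicit Arguments. Unset Strict Implicit. Unset Printing Implicit Defensive.
Import GRing.Theory.
Local Open Scope ring_scope.

Section Defs.
Variable S : comNzRingType.

Definition subS (A B : S -> Prop) : Prop := forall x, A x -> B x.
Definition fullS : S -> Prop := (fun _ : S => True).

Definition is_subring (A : S -> Prop) : Prop :=
  [/\ A 1, (forall x y, A x -> A y -> A (x - y)) &
      (forall x y, A x -> A y -> A (x * y))].

Definition in_interval (A B C : S -> Prop) : Prop :=
  [/\ is_subring C, subS A C & subS C B].

Definition gen (X : S -> Prop) : S -> Prop :=
  fun x => forall D, is_subring D -> subS X D -> D x.

Definition prodR (T U : S -> Prop) : S -> Prop :=
  gen (fun x => T x \/ U x).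

Definition capR (T U : S -> Prop) : S -> Prop := fun x => T x /\ U x.

Definition FCP (A B : S -> Prop) : Prop :=
  forall Ch : (S -> Prop) -> Prop,
    (forall C, Ch C -> in_interval A B C) ->
    (forall C D, Ch C -> Ch D -> subS C D \/ subS D C) ->
    exists l : list (S -> Prop), forall C, Ch C -> List.In C l.

Definition minimal_ext (A C : S -> Prop) : Prop :=
  [/\ is_subring A, is_subring C, subS A C, A <> C &
      forall D, in_interval A C D -> D = A \/ D = C].

Definition atom (A B C : S -> Prop) : Prop :=
  in_interval A B C /\ minimal_ext A C.

(* socle of [A,B]: product of all atoms (as A-algebras; equal to A if there are none) *)
Definition socle (A B : S -> Prop) : S -> Prop :=
  gen (fun x => A x \/ exists C, atom A B C /\ C x).

(* Loewy series of A ⊆ B; terms beyond the length are equal to B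
   (socle B B = B for a subring B) *)
Fixpoint loewy (A B : S -> Prop) (i : nat) : S -> Prop :=
  match i with
  | 0 => A
  | i.+1 => socle (loewy A B i) B
  end.

Definition loewy_length (A B : S -> Prop) (n : nat) : Prop :=
  loewy A B n = B /\ forall k, loewy A B k = B -> (n <= k)%N.

Definition prime_ideal_of (R P : S -> Prop) : Prop :=
  [/\ subS P R, P 0, (forall x y, P x -> P y -> P (x - y)),
      (forall a x, R a -> P x -> P (a * x)) &
      ~ P 1 /\ (forall a b, R a -> R b -> P (a * b) -> P a \/ P b)].

(* P ∈ Supp_R(B/A) for R-modules A ⊆ B (R ⊆ A): (B/A)_P <> 0, i.e. some
   class [x] (x ∈ B) is not killed by any s ∈ R \ P. *)
Definition in_supp (R A B P : S -> Prop) : Prop :=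
  prime_ideal_of R P /\
  exists x, B x /\ forall s, R s -> ~ P s -> ~ A (s * x).

End Defs.

(* Main.v *)
Require Import Defs.
From mathcomp Require Import all_boot all_algebra.
From mathcomp Require Import boolp classical_sets.
From mathcomp Require Import ring.
From Stdlib Require Import List ClassicalEpsilon.
Set Implicit Arguments. Unset Strict Implicit. Unset Printing Implicit Defensive.
Import GRing.Theory.

Module Aux.
Local Open Scope ring_scope.

Section Basics.
Variable S : comNzRingType.
Implicit Types A B C D X Y : S -> Prop.

Lemma predext A B : (forall x, A x <-> B x) -> A = B.
Proof. move=> h; apply: funext => x; apply: propext; exact: h. Qed.

Lemma subS_antisym A B : subS A B -> subS B A -> A = B.
Proof. by move=> h1 h2; apply: predext => x; split; [apply: h1|apply: h2]. Qed.

Section SR.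
Variable A : S -> Prop.
Hypothesis hA : is_subring A.
Lemma sr1 : A 1. Proof. by case: hA. Qed.
Lemma srB x y : A x -> A y -> A (x - y). Proof. by case: hA => _ h _; apply: h. Qed.
Lemma srM x y : A x -> A y -> A (x * y). Proof. by case: hA => _ _ h; apply: h. Qed.
Lemma sr0 : A 0. Proof. by rewrite -(subrr 1); apply: srB; apply: sr1. Qed.
Lemma srN x : A x -> A (- x). Proof. by move=> h; rewrite -sub0r; apply: srB => //; apply: sr0. Qed.
Lemma srD x y : A x -> A y -> A (x + y).
Proof. by move=> h1 h2; rewrite -(opprK y); apply: srB => //; apply: srN. Qed.
Lemma srX x k : A x -> A (x ^+ k).
Proof. move=> h; elim: k => [|k ih]; first by rewrite expr0; apply: sr1. by rewrite exprS; apply: srM. Qed.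
End SR.

Lemma gen_incl X : subS X (gen X).
Proof. by move=> x hx D _ hD; apply: hD. Qed.
Lemma gen_min X D : is_subring D -> subS X D -> subS (gen X) D.
Proof. by move=> hD hXD x hx; apply: hx. Qed.
Lemma gen_subring X : is_subring (gen X).
Proof.
split.
- by move=> D hD _; apply: sr1.
- by move=> x y hx hy D hD hXD; apply: srB => //; [apply: hx|apply: hy].
- by move=> x y hx hy D hD hXD; apply: srM => //; [apply: hx|apply: hy].
Qed.
Lemma gen_mono X Y : subS X Y -> subS (gen X) (gen Y).
Proof. move=> h; apply: gen_min; first exact: gen_subring. by move=> x /h; apply: gen_incl. Qed.
Lemma gen_id A : is_subring A -> gen A = A.
Proof. move=> hA; apply: subS_antisym; [exact: gen_min | exact: gen_incl]. Qed.

Lemma prodR_subring X Y : is_subring (prodR X Y). Proof. exact: gen_subring. Qed.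
Lemma prodR_l X Y : subS X (prodR X Y). Proof. by move=> x hx; apply: gen_incl; left. Qed.
Lemma prodR_r X Y : subS Y (prodR X Y). Proof. by move=> x hx; apply: gen_incl; right. Qed.
Lemma prodR_min X Y D : is_subring D -> subS X D -> subS Y D -> subS (prodR X Y) D.
Proof. by move=> hD h1 h2; apply: gen_min => // x [/h1|/h2]. Qed.
Lemma prodR_mono X Y X' Y' : subS X X' -> subS Y Y' -> subS (prodR X Y) (prodR X' Y').
Proof.
move=> h1 h2; apply: prodR_min; first exact: prodR_subring.
- by move=> x /h1; apply: prodR_l.
- by move=> x /h2; apply: prodR_r.
Qed.
Lemma prodRC X Y : prodR X Y = prodR Y X.
Proof. by apply: subS_antisym; apply: prodR_min; (exact: prodR_subring || exact: prodR_l || exact: prodR_r). Qed.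
Lemma prodR_sub_id X Y : is_subring Y -> subS X Y -> prodR X Y = Y.
Proof.
move=> hY hXY; apply: subS_antisym; last exact: prodR_r.
by apply: prodR_min.
Qed.
Lemma capRC X Y : capR X Y = capR Y X.
Proof. by apply: predext => x; rewrite /capR; split => -[]. Qed.
Lemma capR_subring X Y : is_subring X -> is_subring Y -> is_subring (capR X Y).
Proof.
move=> hX hY; split.
- by split; apply: sr1.
- by move=> x y [] ? ? [] ? ?; split; apply: srB.
- by move=> x y [] ? ? [] ? ?; split; apply: srM.
Qed.
Lemma capR_sub_id X Y : subS X Y -> capR X Y = X.
Proof. by move=> h; apply: predext => x; split => [[]//|hx]; split => //; apply: h. Qed.
Lemma capR_sub_id' X Y : subS Y X -> capR X Y = Y.
Proof. by move=> h; rewrite capRC capR_sub_id. Qed.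

End Basics.


Section Decomp.
Variable S : comNzRingType.
Implicit Types A B C D X Y : S -> Prop.

Record decomp (R T U : S -> Prop) : Prop := Decomp {
  dR : is_subring R;
  dT : in_interval R (@fullS S) T;
  dU : in_interval R (@fullS S) U;
  d1 : forall C, in_interval R (@fullS S) C -> C = prodR (capR C T) (capR C U);
  d2 : forall X Y, in_interval R T X -> in_interval R U Y -> capR (prodR X Y) T = X;
  d3 : forall X Y, in_interval R T X -> in_interval R U Y -> capR (prodR X Y) U = Y
}.

Lemma decompC R T U : decomp R T U -> decomp R U T.
Proof.
case=> hR hT hU h1 h2 h3; split => //.
- by move=> C hC; rewrite prodRC; apply: h1.
- by move=> X Y hX hY; rewrite prodRC; apply: h3.
- by move=> X Y hX hY; rewrite prodRC; apply: h2.
Qed.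

Lemma in_int_sub R T X : in_interval R T X -> subS X T.
Proof. by case. Qed.
Lemma in_int_low R T X : in_interval R T X -> subS R X.
Proof. by case. Qed.
Lemma in_int_sr R T X : in_interval R T X -> is_subring X.
Proof. by case. Qed.

Section Inner.
Variables (R T U : S -> Prop).
Hypothesis hd : decomp R T U.

Lemma hTsr : is_subring T. Proof. by case: (dT hd). Qed.
Lemma hUsr : is_subring U. Proof. by case: (dU hd). Qed.
Lemma hRT : subS R T. Proof. by case: (dT hd). Qed.
Lemma hRU : subS R U. Proof. by case: (dU hd). Qed.

Lemma atom_proj X Y C : in_interval R T X -> in_interval R U Y ->
  atom (prodR X Y) (@fullS S) C -> capR C T = X \/ atom X T (capR C T).
Proof.
move=> hX hY [[hC hXYC _] [_ _ _ hne hmin]].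
have hXsr := in_int_sr hX; have hYsr := in_int_sr hY.
have RX := in_int_low hX; have XT := in_int_sub hX.
have RY := in_int_low hY; have YU := in_int_sub hY.
have hTs := hTsr; have hUs := hUsr.
have hCT : in_interval R T (capR C T).
  split; first exact: capR_subring.
  - by move=> x hx; split; [apply: hXYC; apply: prodR_l; apply: RX | apply: hRT].
  - by move=> x [].
have hCU : in_interval R U (capR C U).
  split; first exact: capR_subring.
  - by move=> x hx; split; [apply: hXYC; apply: prodR_l; apply: RX | apply: hRU].
  - by move=> x [].
have [e|ne] := pselect (capR C T = X); first by left.
right; split.
  split; first exact: capR_subring.
  - by move=> x hx; split; [apply: hXYC; apply: prodR_l | apply: XT].
  - by move=> x [].
split => //; first exact: capR_subring.
  by move=> x hx; split; [apply: hXYC; apply: prodR_l | apply: XT].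
  by move=> e; apply: ne.
move=> D [hDs XD DCT].
have hDint : in_interval R T D.
  split => //; first by move=> x /RX /XD.
  by move=> x /DCT [].
have hE : in_interval (prodR X Y) C (prodR D (capR C U)).
  split; first exact: prodR_subring.
  - apply: prodR_mono => // x hx; split; first by apply: hXYC; apply: prodR_r.
    exact: YU.
  - apply: prodR_min => //; first by move=> x /DCT [].
    by move=> x [].
have eD := d2 hd hDint hCU.
case: (hmin _ hE) => e.
  by left; rewrite -eD e (d2 hd hX hY).
by right; rewrite -eD e.
Qed.

Lemma atom_lift X Y E : in_interval R T X -> in_interval R U Y ->
  atom X T E -> atom (prodR X Y) (@fullS S) (prodR E Y).
Proof.
move=> hX hY [[hEs XE ET] [_ _ _ hne hmin]].
have hXsr := in_int_sr hX; have hYsr := in_int_sr hY.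
have RX := in_int_low hX.
have hEint : in_interval R T E by split => // x /RX /XE.
split.
  split; first exact: prodR_subring.
  - by apply: prodR_mono.
  - by [].
split => //; try exact: prodR_subring.
- by apply: prodR_mono.
- move=> e; apply: hne.
  by rewrite -(d2 hd hX hY) -(d2 hd hEint hY) e.
move=> D [hDs XYD DEY].
have hDint : in_interval R (@fullS S) D.
  by split => // x hx; apply: XYD; apply: prodR_l; apply: RX.
have eD := d1 hd hDint.
have eU : capR D U = Y.
  apply: subS_antisym.
  - move=> x [hx hu]; have : capR (prodR E Y) U x by split => //; exact: DEY.
    by rewrite (d3 hd hEint hY).
  - move=> x hx; split; [apply: XYD; apply: prodR_r | apply: (in_int_sub hY)] => //.
have hDT : in_interval X E (capR D T).
  split; first by apply: capR_subring => //; exact: hTsr.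
  - by move=> x hx; split; [apply: XYD; apply: prodR_l | apply: (in_int_sub hX)].
  - move=> x [hx hu]; have : capR (prodR E Y) T x by split => //; exact: DEY.
    by rewrite (d2 hd hEint hY).
case: (hmin _ hDT) => e.
  by left; rewrite eD e eU.
by right; rewrite eD e eU.
Qed.

End Inner.

Lemma socle_decomp R T U X Y : decomp R T U -> in_interval R T X -> in_interval R U Y ->
  socle (prodR X Y) (@fullS S) = prodR (socle X T) (socle Y U).
Proof.
move=> hd hX hY.
have hdC := decompC hd.
apply: subS_antisym.
- apply: gen_min; first exact: prodR_subring.
  move=> x [hx|[C [hC hCx]]].
    by apply: (prodR_mono _ _ hx) => y hy; apply: gen_incl; left.
  have hCint : in_interval R (@fullS S) C.
    case: hC => -[hCs XYC _] _; split => // y hy; apply: XYC; apply: prodR_l.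
    exact: (in_int_low hX).
  rewrite (d1 hd hCint) in hCx.
  apply: (prodR_mono _ _ hCx).
  + case: (atom_proj hd hX hY hC) => [-> | hat] y hy; apply: gen_incl; first by left.
    by right; exists (capR C T).
  + have hC' : atom (prodR Y X) (@fullS S) C by rewrite prodRC.
    case: (atom_proj hdC hY hX hC') => [-> | hat] y hy; apply: gen_incl; first by left.
    by right; exists (capR C U).
- have hsr := @gen_subring S (fun x => prodR X Y x \/ exists C, atom (prodR X Y) (@fullS S) C /\ C x).
  apply: prodR_min => //.
  + apply: gen_min => // x [hx|[E [hE hEx]]].
      by apply: gen_incl; left; apply: prodR_l.
    apply: gen_incl; right; exists (prodR E Y); split; first exact: (atom_lift hd).
    exact: prodR_l.
  + apply: gen_min => // x [hx|[E [hE hEx]]].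
      by apply: gen_incl; left; apply: prodR_r.
    apply: gen_incl; right; exists (prodR E X); split.
      rewrite prodRC; exact: (atom_lift hdC hY hX hE).
    exact: prodR_l.
Qed.

End Decomp.


Section Loewy.
Variable S : comNzRingType.
Implicit Types A B C D X Y : S -> Prop.

Lemma socle_in R B A : is_subring B -> in_interval R B A -> in_interval R B (socle A B).
Proof.
move=> hB [hA RA AB]; split; first exact: gen_subring.
- by move=> x /RA hx; apply: gen_incl; left.
- apply: gen_min => //. rewrite /subS. move=> x [hx|[C [[[_ _ CB] _] hCx]]].
  + exact: AB hx.
  + exact: CB hCx.
Qed.

Lemma loewy_in R B : is_subring R -> is_subring B -> subS R B ->
  forall i, in_interval R B (loewy R B i).
Proof.
move=> hR hB RB; elim => [|i ih] /=; first by split.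
exact: socle_in.
Qed.

Lemma socle_self B : is_subring B -> socle B B = B.
Proof.
move=> hB; apply: subS_antisym.
- apply: gen_min => // x [//|[C [[[_ BC CB] [_ _ _ ne _]] _]]].
  by exfalso; apply: ne; apply: subS_antisym.
- by move=> x hx; apply: gen_incl; left.
Qed.

Lemma loewy_stable A B k : is_subring B -> loewy A B k = B ->
  forall j, (k <= j)%N -> loewy A B j = B.
Proof.
move=> hB hk; elim => [|j ih]; first by rewrite leqn0 => /eqP <-.
rewrite leq_eqVlt => /orP[/eqP <- //|hkj].
by rewrite /= ih //; apply: socle_self.
Qed.

Lemma loewy_decomp R T U : decomp R T U ->
  forall i, loewy R (@fullS S) i = prodR (loewy R T i) (loewy R U i).
Proof.
move=> hd; have hR := dR hd.
elim => [|i ih] /=; first by rewrite prodR_sub_id.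
rewrite ih; apply: (socle_decomp hd).
- exact: (loewy_in hR (hTsr hd) (hRT hd)).
- exact: (loewy_in hR (hUsr hd) (hRU hd)).
Qed.

Lemma exists_len A B n : loewy A B n = B -> exists m, loewy_length A B m.
Proof.
move=> hn.
have ex : exists k, (fun k => `[< loewy A B k = B >]) k by exists n; apply/asboolP.
exists (ex_minn ex); case: ex_minnP => m /asboolP hm hmin; split => // k hk.
by apply: hmin; apply/asboolP.
Qed.

Lemma main_from_decomp R T U n : decomp R T U ->
  loewy_length R (@fullS S) n ->
    [/\ (in_interval R (@fullS S) U /\ capR T U = R /\ prodR T U = @fullS S),
        (forall U', in_interval R (@fullS S) U' ->
            capR T U' = R -> prodR T U' = @fullS S -> U' = U),
        (forall i, (i <= n)%N ->
            loewy R (@fullS S) i = prodR (loewy R T i) (loewy R U i)) &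
        (exists m r, [/\ loewy_length R T m, loewy_length R U r &
                         n = maxn m r])].
Proof.
move=> hd [hn hnmin].
have hR := dR hd; have hT := dT hd; have hU := dU hd.
have hTs := hTsr hd; have hUs := hUsr hd.
have RT := hRT hd; have RU := hRU hd.
have hRT' : in_interval R T R by split.
have hRU' : in_interval R U R by split.
have hTT : in_interval R T T by split.
have hUU : in_interval R U U by split.
have cTU : capR T U = R.
  by rewrite capRC -{1}(prodR_sub_id hUs RU) (d2 hd hRT' hUU).
have pTU : prodR T U = @fullS S.
  have hS : in_interval R (@fullS S) (@fullS S).
    split => //; split => //.
  rewrite [RHS](d1 hd hS); congr prodR; apply: predext => x; split; by [case | split].
have hl := loewy_decomp hd.
split => //.
- move=> U' hU' c' p'.
  have e1 := d1 hd hU'.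
  have cU'T : capR U' T = R by rewrite capRC.
  rewrite cU'T prodR_sub_id in e1; last first.
    + by move=> x hx; split; [apply: (in_int_low hU') | apply: RU].
    + apply: capR_subring => //; exact: (in_int_sr hU').
  have hU'U : in_interval R U U'.
    split; [exact: (in_int_sr hU') | exact: (in_int_low hU') | ].
    by rewrite e1 => x [].
  have := d3 hd hTT hU'U; rewrite p' => e2.
  by rewrite -e2; apply: predext => x; split; by [case | split].
- have e := hl n; rewrite hn in e.
  have eT : loewy R T n = T.
    have := d2 hd (loewy_in hR hTs RT n) (loewy_in hR hUs RU n).
    by rewrite -e => <-; apply: predext => x; split; by [case | split].
  have eU : loewy R U n = U.
    have := d3 hd (loewy_in hR hTs RT n) (loewy_in hR hUs RU n).
    by rewrite -e => <-; apply: predext => x; split; by [case | split].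
  have [m [hm hmmin]] := exists_len eT.
  have [r [hr hrmin]] := exists_len eU.
  exists m, r; split => //.
  apply/eqP; rewrite eqn_leq; apply/andP; split.
  + apply: hnmin; rewrite hl.
    rewrite (loewy_stable hTs hm (leq_maxl m r)) (loewy_stable hUs hr (leq_maxr m r)).
    exact: pTU.
  + by rewrite geq_max (hmmin _ eT) (hrmin _ eU).
Qed.

End Loewy.


Section Prime.
Variable S : comNzRingType.

Definition ideal_ok (R N I : S -> Prop) :=
  [/\ subS N I, subS I R, (forall x y, I x -> I y -> I (x - y)),
      (forall a x, R a -> I x -> I (a * x)) & ~ I 1].

Lemma exists_prime (R N : S -> Prop) : is_subring R -> subS N R -> N 0 ->
  (forall x y, N x -> N y -> N (x - y)) -> (forall a x, R a -> N x -> N (a * x)) ->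
  ~ N 1 -> exists P, prime_ideal_of R P /\ subS N P.
Proof.
move=> hR NR N0 Nsub Nmul N1.
pose Pset := fun I : set S => I = set0 \/ ideal_ok R N I.
have [A [PA Amax]] : exists A, Pset A /\ forall B, (A `<` B)%classic -> ~ Pset B.
  apply: Zorn_bigcup => F FP Ftot.
  have [[I0 [FI0 okI0]]|none] := pselect (exists I, F I /\ ideal_ok R N I); last first.
    left; apply: predext => x; split => //= -[I FI Ix].
    case: (FP _ FI) => [e|ok]; first by rewrite e in Ix.
    by apply: none; exists I.
  have memok : forall I x, F I -> I x -> ideal_ok R N I.
    by move=> I x FI Ix; case: (FP _ FI) => // e; rewrite e in Ix.
  right; split.
  - by move=> x hx; exists I0 => //; case: okI0 => h _ _ _ _; apply: h.
  - by move=> x [I FI Ix]; case: (memok _ _ FI Ix) => _ h _ _ _; apply: h.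
  - move=> x y [I1 F1 I1x] [I2 F2 I2y].
    case: (Ftot _ _ F1 F2) => h.
      exists I2 => //; case: (memok _ _ F2 I2y) => _ _ h' _ _; apply: h' => //; exact: h.
    exists I1 => //; case: (memok _ _ F1 I1x) => _ _ h' _ _; apply: h' => //; exact: h.
  - move=> a x Ra [I FI Ix]; exists I => //.
    by case: (memok _ _ FI Ix) => _ _ _ h _; apply: h.
  - by move=> [I FI I1]; case: (memok _ _ FI I1).
have okA : ideal_ok R N A.
  case: PA => // e; exfalso; apply: (Amax N).
    rewrite e; split => // h; exact: (h 0 N0).
  by right; split.
case: okA => NA AR Asub Amul A1.
have A0 : A 0 by apply: (NA).
have Aadd : forall x y, A x -> A y -> A (x + y).
  move=> x y hx hy; rewrite -[y]opprK; apply: (Asub) => //.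
  by rewrite -sub0r; apply: (Asub).
exists A; split => //; split => //; split => // a b Ra Rb Aab.
apply: contrapT => /not_orP [na nb].
have gen1 : forall c, R c -> ~ A c -> exists p r, A p /\ R r /\ 1 = p + r * c.
  move=> c Rc nc.
  pose B := fun x => exists p r, A p /\ R r /\ x = p + r * c.
  have AB : (A `<` B)%classic.
    split; first by move=> x hx; exists x, 0; split => //; split; [apply: (sr0 hR)|rewrite mul0r addr0].
    by move=> h; apply: nc; apply: h; exists 0, 1; split => //; split; [apply: (sr1 hR) | rewrite mul1r add0r].
  have := Amax _ AB; rewrite /Pset => h.
  apply: contrapT => n1; apply: h; right; split.
  - by move=> x /NA hx; exists x, 0; split => //; split; [apply: (sr0 hR)|rewrite mul0r addr0].
  - move=> x [p [r [Ap [Rr ->]]]]; apply: srD => //; first exact: (AR).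
    by apply: srM.
  - move=> x y [p1 [r1 [A1' [R1 ->]]]] [p2 [r2 [A2' [R2 ->]]]].
    exists (p1 - p2), (r1 - r2); split; first exact: (Asub).
    split; first exact: srB.
    by ring.
  - move=> d x Rd [p [r [Ap [Rr ->]]]]; exists (d * p), (d * r); split; first exact: (Amul).
    split; first exact: srM.
    by ring.
  - by move=> [p [r [Ap [Rr e]]]]; apply: n1; exists p, r.
have [p1 [r1 [Ap1 [Rr1 e1]]]] := gen1 a Ra na.
have [p2 [r2 [Ap2 [Rr2 e2]]]] := gen1 b Rb nb.
apply: A1.
have -> : 1 = (p1 + r1 * a) * (p2 + r2 * b) by rewrite -e1 -e2 mulr1.
have -> : (p1 + r1 * a) * (p2 + r2 * b) = p1 * (p2 + r2 * b) + (r1 * a) * p2 + (r1 * r2) * (a * b) by ring.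
apply: (Aadd); first apply: (Aadd).
- by rewrite mulrC; apply: (Amul) => //; apply: srD => //; [exact: (AR) | apply: srM => //; exact: (AR)].
- by apply: (Amul) => //; apply: srM.
- by apply: (Amul) => //; apply: srM.
Qed.

End Prime.


Section FG.
Variable S : comNzRingType.
Variables (R T : S -> Prop).
Hypothesis hR : is_subring R.
Hypothesis hfcp : FCP R (@fullS S).

Definition Gl (ys : list S) := gen (fun z => R z \/ In z ys).

Lemma Gl_int ys : in_interval R (@fullS S) (Gl ys).
Proof. split => //; first exact: gen_subring. by move=> x hx; apply: gen_incl; left. Qed.

Lemma fcp_fg : exists ys : list S, (forall y, In y ys -> T y) /\ subS T (Gl ys).
Proof.
apply: contrapT => hno.
have H : forall ys, (forall y, In y ys -> T y) -> exists z, T z /\ ~ Gl ys z.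
  move=> ys hys; apply: contrapT => hn; apply: hno; exists ys; split => // z Tz.
  by apply: contrapT => nz; apply: hn; exists z.
pose nxt ys := epsilon (inhabits (0 : S)) (fun z => T z /\ ~ Gl ys z).
pose fix gs k := match k with 0%N => nil | k'.+1 => nxt (gs k') :: gs k' end.
have good : forall k, (forall y, In y (gs k) -> T y).
  elim => [|k ih] y //= [<-|hy]; last exact: ih.
  by case: (epsilon_spec (inhabits (0 : S)) _ (H _ ih)).
have nxt_spec : forall k, ~ Gl (gs k) (nxt (gs k)).
  by move=> k; case: (epsilon_spec (inhabits (0 : S)) _ (H _ (good k))).
have incl_gs : forall k k', (k <= k')%N -> forall y, In y (gs k) -> In y (gs k').
  move=> k k'; elim: k' => [|k' ih]; first by rewrite leqn0 => /eqP ->.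
  rewrite leq_eqVlt => /orP[/eqP -> //|hk] y hy /=; right; exact: ih.
have mono : forall k k', (k <= k')%N -> subS (Gl (gs k)) (Gl (gs k')).
  move=> k k' hk; apply: gen_mono => z [hz|hz]; [by left | right; exact: incl_gs hz].
have neq : forall k k', (k < k')%N -> Gl (gs k) <> Gl (gs k').
  move=> k k' hk e; apply: (nxt_spec k); rewrite e; apply: (mono k.+1) => //.
  by apply: gen_incl; right; left.
have [l hl] : exists l : list (S -> Prop), forall C, (exists k, C = Gl (gs k)) -> In C l.
  apply: hfcp.
  - by move=> C [k ->]; exact: Gl_int.
  - move=> C D [k ->] [k' ->]; case: (leqP k k') => h; [left; exact: mono | right; apply: mono; exact: ltnW].
have hnd : NoDup (map (fun k => Gl (gs k)) (seq 0 (length l).+1)).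
  apply: NoDup_map_NoDup_ForallPairs; last exact: seq_NoDup.
  move=> k k' _ _ e; apply/eqP; apply: contrapT => /negP hne.
  case: (ltngtP k k') => h; [exact: (neq _ _ h) | exact: (neq _ _ h) (esym e) | by rewrite h eqxx in hne].
have hinc : incl (map (fun k => Gl (gs k)) (seq 0 (length l).+1)) l.
  move=> C /in_map_iff [k [<- _]]; apply: hl; by exists k.
have := NoDup_incl_length hnd hinc.
rewrite length_map length_seq => /PeanoNat.Nat.nle_succ_diag_l //.
Qed.

End FG.


Section Constr.
Variable S : comNzRingType.
Variables (R T : S -> Prop).
Hypothesis hR : is_subring R.
Hypothesis hT : in_interval R (@fullS S) T.

Definition Uc : S -> Prop := fun w => forall z, T z ->
  exists a b, [/\ R a, R b, a + b = 1, R (a * w) & R (b * z)].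

Lemma comb_eq (a1 i1 a2 i2 : S) : a1 + i1 = 1 -> a2 + i2 = 1 ->
  a1 * a2 + (i1 + a1 * i2) = 1.
Proof.
move=> e1 e2; have -> : a1 * a2 + (i1 + a1 * i2) = a1 * (a2 + i2) + i1 by ring.
by rewrite e2 mulr1.
Qed.

Lemma Uc_subring : is_subring Uc.
Proof.
split.
- move=> z Tz; exists 1, 0; split; rewrite ?mul1r ?mul0r ?addr0 //; first [exact: (sr1 hR) | exact: (sr0 hR)].
- move=> x y hx hy z Tz.
  have [a1 [b1 [Ra1 Rb1 e1 Rx Rz1]]] := hx z Tz.
  have [a2 [b2 [Ra2 Rb2 e2 Ry Rz2]]] := hy z Tz.
  exists (a1 * a2), (b1 + a1 * b2); split.
  + exact: srM.
  + by apply: srD => //; apply: srM.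
  + exact: comb_eq.
  + have -> : a1 * a2 * (x - y) = a2 * (a1 * x) - a1 * (a2 * y) by ring.
    by apply: srB => //; apply: srM.
  + rewrite mulrDl -mulrA; apply: srD => //; exact: srM.
- move=> x y hx hy z Tz.
  have [a1 [b1 [Ra1 Rb1 e1 Rx Rz1]]] := hx z Tz.
  have [a2 [b2 [Ra2 Rb2 e2 Ry Rz2]]] := hy z Tz.
  exists (a1 * a2), (b1 + a1 * b2); split.
  + exact: srM.
  + by apply: srD => //; apply: srM.
  + exact: comb_eq.
  + have -> : a1 * a2 * (x * y) = (a1 * x) * (a2 * y) by ring.
    exact: srM.
  + rewrite mulrDl -mulrA; apply: srD => //; exact: srM.
Qed.

Lemma R_Uc : subS R Uc.
Proof.
move=> w Rw z Tz; exists 1, 0; split; rewrite ?mul1r ?mul0r ?addr0 //.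
exact: (sr1 hR). exact: (sr0 hR). exact: (sr0 hR).
Qed.

Lemma loc_trick X Y z : is_subring X -> subS R X ->
  (forall w, Y w -> exists a i, [/\ R a, R i, a + i = 1, X (a * w) & X (i * z)]) ->
  gen (fun w => X w \/ Y w) z -> X z.
Proof.
move=> hX RX hY hz.
pose Q := fun w => exists a i, [/\ R a, R i, a + i = 1, X (a * w) & X (i * z)].
have hQ : is_subring Q.
  split.
  - exists 1, 0; split; rewrite ?mul1r ?mul0r ?addr0 //; first [exact: (sr1 hR) | exact: (sr0 hR) | exact: (sr1 hX) | exact: (sr0 hX)].
  - move=> x y [a1 [i1 [Ra1 Ri1 e1 X1 Z1]]] [a2 [i2 [Ra2 Ri2 e2 X2 Z2]]].
    exists (a1 * a2), (i1 + a1 * i2); split.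
    + exact: srM.
    + by apply: srD => //; apply: srM.
    + exact: comb_eq.
    + have -> : a1 * a2 * (x - y) = a2 * (a1 * x) - a1 * (a2 * y) by ring.
      by apply: srB => //; apply: srM => //; apply: RX.
    + rewrite mulrDl -mulrA; apply: srD => //; apply: srM => //; exact: RX.
  - move=> x y [a1 [i1 [Ra1 Ri1 e1 X1 Z1]]] [a2 [i2 [Ra2 Ri2 e2 X2 Z2]]].
    exists (a1 * a2), (i1 + a1 * i2); split.
    + exact: srM.
    + by apply: srD => //; apply: srM.
    + exact: comb_eq.
    + have -> : a1 * a2 * (x * y) = (a1 * x) * (a2 * y) by ring.
      exact: srM.
    + rewrite mulrDl -mulrA; apply: srD => //; apply: srM => //; exact: RX.
have : Q z.
  apply: (gen_min hQ _ hz) => w [Xw|Yw]; last exact: hY.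
  exists 1, 0; split; rewrite ?mul1r ?mul0r ?addr0 //.
  exact: (sr1 hR). exact: (sr0 hR). exact: (sr0 hX).
move=> [a [i [Ra Ri e Xa Xi]]].
have -> : z = a * z + i * z by rewrite -mulrDl e mul1r.
exact: srD.
Qed.

End Constr.


Section Dec.
Variable S : comNzRingType.
Variables (R T : S -> Prop) (ys : list S).
Hypothesis hR : is_subring R.
Hypothesis hT : in_interval R (@fullS S) T.
Hypothesis hsupp : forall P, ~ (in_supp R R T P /\ in_supp R T (@fullS S) P).
Hypothesis hys : forall y, In y ys -> T y.
Hypothesis hTG : subS T (Gl R ys).

Let U := Uc R T.
Let hTs : is_subring T. Proof. by case: hT. Qed.
Let RT : subS R T. Proof. by case: hT. Qed.

Lemma dec_d2 X Y : in_interval R T X -> in_interval R U Y -> capR (prodR X Y) T = X.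
Proof.
move=> [hX RX XT] [hY RY YU]; apply: subS_antisym.
- move=> z [hz Tz]; apply: (loc_trick hR hX RX _ hz) => w Yw.
  have [a [b [Ra Rb e Rw Rz]]] := YU w Yw z Tz.
  by exists a, b; split => //; apply: RX.
- by move=> z hz; split; [apply: prodR_l | apply: XT].
Qed.

Lemma dec_d3 X Y : in_interval R T X -> in_interval R U Y -> capR (prodR X Y) U = Y.
Proof.
move=> [hX RX XT] [hY RY YU]; apply: subS_antisym.
- move=> z [hz Uz]; rewrite prodRC in hz.
  apply: (loc_trick hR hY RY _ hz) => w Xw.
  have [a [b [Ra Rb e Rz Rw]]] := Uz w (XT _ Xw).
  by exists b, a; split => //; [rewrite addrC | apply: RY | apply: RY].
- by move=> z hz; split; [apply: prodR_r | apply: YU].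
Qed.

Lemma powers (u m : S) : R u -> R m -> u + m = 1 ->
  forall K, exists al, R al /\ u * al + m ^+ K = 1.
Proof.
move=> Ru Rm e; elim => [|K [al [Ral eK]]].
  by exists 0; split; [exact: (sr0 hR) | rewrite mulr0 add0r expr0].
exists (1 + m * al); split; first by apply: (srD hR); [exact: (sr1 hR) | exact: (srM hR)].
have -> : u * (1 + m * al) + m ^+ K.+1 = u + m * (u * al + m ^+ K) by rewrite exprS; ring.
by rewrite eK mulr1.
Qed.

Lemma Zm_T (m : S) : R m -> (forall y, In y ys -> R (m * y)) ->
  forall z, T z -> exists K, R (m ^+ K * z).
Proof.
move=> Rm hm z Tz.
pose Z := fun z => exists K, R (m ^+ K * z).
have hZ : is_subring Z.
  split.
  - by exists 0%N; rewrite expr0 mul1r; exact: (sr1 hR).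
  - move=> x y [K1 h1] [K2 h2]; exists (K1 + K2)%N.
    have -> : m ^+ (K1 + K2) * (x - y) = m ^+ K2 * (m ^+ K1 * x) - m ^+ K1 * (m ^+ K2 * y)
      by rewrite exprD; ring.
    by apply: srB => //; apply: srM => //; apply: srX.
  - move=> x y [K1 h1] [K2 h2]; exists (K1 + K2)%N.
    have -> : m ^+ (K1 + K2) * (x * y) = (m ^+ K1 * x) * (m ^+ K2 * y) by rewrite exprD; ring.
    exact: srM.
have : Z z.
  apply: (gen_min hZ _ (hTG Tz)) => w [Rw|Yw].
    by exists 0%N; rewrite expr0 mul1r.
  by exists 1%N; rewrite expr1; apply: hm.
done.
Qed.

Lemma step1 x : exists u m, [/\ R u, R m, u + m = 1, T (u * x) &
  forall y, In y ys -> R (m * y)].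
Proof.
apply: contrapT => hno.
pose N := fun r => exists u m, [/\ R u, R m, T (u * x), (forall y, In y ys -> R (m * y)) & r = u + m].
have [P [hP NP]] : exists P, prime_ideal_of R P /\ subS N P.
  apply: exists_prime => //.
  - by move=> r [u [m [Ru Rm _ _ ->]]]; apply: srD.
  - exists 0, 0; split.
    + exact: (sr0 hR).
    + exact: (sr0 hR).
    + by rewrite mul0r; exact: (sr0 hTs).
    + by move=> y _; rewrite mul0r; exact: (sr0 hR).
    + by rewrite addr0.
  - move=> r s [u1 [m1 [Ru1 Rm1 Tu1 hm1 ->]]] [u2 [m2 [Ru2 Rm2 Tu2 hm2 ->]]].
    exists (u1 - u2), (m1 - m2); split.
    + exact: srB.
    + exact: srB.
    + by rewrite mulrBl; apply: srB.
    + by move=> y hy; rewrite mulrBl; apply: srB => //; [apply: hm1 | apply: hm2].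
    + by ring.
  - move=> a r Ra [u [m [Ru Rm Tu hm ->]]].
    exists (a * u), (a * m); split.
    + exact: srM.
    + exact: srM.
    + by rewrite -mulrA; apply: srM => //; apply: RT.
    + by move=> y hy; rewrite -mulrA; apply: srM => //; apply: hm.
    + by ring.
  - move=> [u [m [Ru Rm Tu hm e]]]; apply: hno; exists u, m; split => //.
case: (hP) => PR P0 Psub Pmul [P1 Pprime].
suff : in_supp R R T P /\ in_supp R T (@fullS S) P by exact: hsupp.
split.
- split => //.
  apply: contrapT => hn.
  have hy : forall y, In y ys -> exists s, [/\ R s, ~ P s & R (s * y)].
    move=> y hy; apply: contrapT => hn2; apply: hn; exists y; split; first exact: hys.
    move=> s Rs nPs Rsy; apply: hn2; exists s; split => //.
  have [s [Rs nPs hs]] : exists s, [/\ R s, ~ P s & forall y, In y ys -> R (s * y)].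
    elim: (ys) hy => [|y0 l ih] hy'.
      by exists 1; split => //; exact: (sr1 hR).
    have [s1 [Rs1 nP1 R1]] := hy' y0 (or_introl erefl).
    have [s2 [Rs2 nP2 R2]] := ih (fun y h => hy' y (or_intror h)).
    exists (s1 * s2); split.
    + exact: srM.
    + by move=> /(Pprime _ _ Rs1 Rs2) [].
    + move=> y [<-|hyl].
        by rewrite mulrAC; apply: srM.
      by rewrite -mulrA; apply: srM => //; apply: R2.
  apply: nPs; apply: NP; exists 0, s; split => //.
  + exact: (sr0 hR).
  + by rewrite mul0r; exact: (sr0 hTs).
  + by rewrite add0r.
- split => //; exists x; split => // s Rs nPs Tsx; apply: nPs; apply: NP.
  exists s, 0; split => //.
  + exact: (sr0 hR).
  + by move=> y _; rewrite mul0r; exact: (sr0 hR).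
  + by rewrite addr0.
Qed.

Lemma dec_d1 C : in_interval R (@fullS S) C -> C = prodR (capR C T) (capR C U).
Proof.
move=> [hC RC _]; apply: subS_antisym; last first.
  by apply: prodR_min => // z [].
move=> x Cx.
have [u [m [Ru Rm e Tux hm]]] := step1 x.
have [K hK] := Zm_T Rm hm Tux.
have [al [Ral eal]] := powers Ru Rm e K.
have -> : x = al * (u * x) + m ^+ K * x.
  by rewrite mulrA (mulrC al u) -mulrDl eal mul1r.
apply: (srD (prodR_subring _ _)).
- apply: prodR_l; split.
  + by apply: (srM hC); [apply: RC | apply: (srM hC) => //; apply: RC].
  + by apply: (srM hTs) => //; apply: RT.
- apply: prodR_r; split.
  + by apply: (srM hC) => //; apply: RC; apply: (srX hR).
  + move=> z Tz.
    have [K' hK'] := Zm_T Rm hm Tz.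
    have [be [Rbe ebe]] := powers Ru Rm e K'.
    exists (u * be), (m ^+ K'); split => //.
    * exact: (srM hR).
    * exact: (srX hR).
    * have -> : u * be * (m ^+ K * x) = be * (m ^+ K * (u * x)) by ring.
      exact: (srM hR).
Qed.

Lemma dec_all : decomp R T U.
Proof.
split => //.
- split => //; [exact: Uc_subring | exact: R_Uc].
- exact: dec_d1.
- exact: dec_d2.
- exact: dec_d3.
Qed.

End Dec.

End Aux.
Import Aux.

Theorem proposition8p12 (S : comNzRingType) (R T : S -> Prop) (n : nat) :
  is_subring R ->
  FCP R (@fullS S) ->
  loewy_length R (@fullS S) n ->
  in_interval R (@fullS S) T -> T <> R -> T <> @fullS S ->
  (forall P, ~ (in_supp R R T P /\ in_supp R T (@fullS S) P)) ->
  exists U : S -> Prop,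
    [/\ (in_interval R (@fullS S) U /\ capR T U = R /\ prodR T U = @fullS S),
        (forall U', in_interval R (@fullS S) U' ->
            capR T U' = R -> prodR T U' = @fullS S -> U' = U),
        (forall i, (i <= n)%N ->
            loewy R (@fullS S) i = prodR (loewy R T i) (loewy R U i)) &
        (exists m r, [/\ loewy_length R T m, loewy_length R U r &
                         n = maxn m r])].
Proof.
move=> hR hfcp hn hT _ _ hsupp.
have [ys [hys hTG]] := fcp_fg T hfcp.
exists (Uc R T).
exact: (main_from_decomp (dec_all hR hT hsupp hys hTG) hn).
Qed.
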